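(* Consider the rendezvous game on a connected graph $G$ against Divider with exactly one agent $D_1$. Suppose that at some moment when it is Facilitator's turn to move, $R$ and $J$ occupy vertices of a cycle $C$ of $G$ that has no shortcut, and $D_1$ also occupies a vertex of $C$. Then Facilitator has a winning strategy in which $R$ and $J$ meet within at most $\ell(C)/2$ further moves of Facilitator.
   Context: Rendezvous game with adversaries. Let $G$ be a finite, simple, undirected, connected graph, let $s,t\in V(G)$ and let $k\ge 1$ be an integer. Two players play: Facilitator, who controls two agents $R$ and $J$ initially placed on $s$ and $t$ respectively, and Divider, who controls $k$ agents $D_1,\dots,D_k$ which Divider initially places on vertices of $V(G)\setminus\{s,t\}$ of his choice (several agents may share a vertex). After the initial placement the players alternate moves, Facilitator moving first. In a move, the player moves each of his agents to an adjacent vertex or leaves it where it is; no agent may be moved to a vertex currently occupied by an agent of the opponent. Both players have full information. Facilitator wins if at some moment $R$ and $J$ occupy the same vertex; Divider wins if this never happens. $\ell(P)$, $\ell(C)$ denote the number of edges of a path $P$ or cycle $C$. For a cycle $C$ of $G$ and distinct $u,v\in V(C)$, let $P_1,P_2$ be the two internally vertex-disjoint $(u,v)$-paths contained in $C$. $C$ has a $(u,v)$-shortcut if there is a $(u,v)$-path $P$ in $G-(V(C)\setminus\{u,v\})$ with $\ell(P)<\ell(P_1)$ and $\ell(P)<\ell(P_2)$; $C$ has a shortcut if it has a $(u,v)$-shortcut for some distinct $u,v\in V(C)$. *)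

(* Defs.v *)
From mathcomp Require Import all_boot.
Set Implicit Arguments. Unset Strict Implicit. Unset Printing Implicit Defensive.

Definition simple_graph (T : finType) (e : rel T) : Prop :=
  symmetric e /\ irreflexive e.

Definition connected_graph (T : finType) (e : rel T) : Prop :=
  forall x y : T, connect e x y.

(* A cycle of G, given as the cyclic sequence of its (distinct) vertices;
   ell(C) = size c (number of edges = number of vertices). *)
Definition is_cycle (T : finType) (e : rel T) (c : seq T) : Prop :=
  [/\ 3 <= size c, uniq c & cycle e c].

(* Lengths of the two (u,v)-paths contained in C, u v in C distinct. *)
Definition arc1 (T : finType) (c : seq T) (u v : T) : nat :=
  maxn (index u c) (index v c) - minn (index u c) (index v c).
Definition arc2 (T : finType) (c : seq T) (u v : T) : nat :=
  size c - arc1 c u v.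

(* p is (the tail of) a (u,v)-path in G - (V(C) \ {u,v}):
   the vertex sequence u :: p is a path in G, without repeated vertices,
   ending at v, and every vertex is u, v, or outside C. Its length is size p. *)
Definition avoiding_path (T : finType) (e : rel T) (c : seq T) (u v : T)
    (p : seq T) : Prop :=
  [/\ path e u p, last u p = v, uniq (u :: p)
    & all (fun x => (x == u) || (x == v) || (x \notin c)) (u :: p)].

Definition has_shortcut_uv (T : finType) (e : rel T) (c : seq T) (u v : T) : Prop :=
  exists p : seq T, avoiding_path e c u v p /\
    size p < arc1 c u v /\ size p < arc2 c u v.

Definition has_shortcut (T : finType) (e : rel T) (c : seq T) : Prop :=
  exists u v : T, [/\ u \in c, v \in c, u != v & has_shortcut_uv e c u v].

Definition step (T : finType) (e : rel T) (x y : T) : bool := (x == y) || e x y.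

(* Rendezvous game with one Divider agent.
   fac_wins_within e n r j d : in the position where R is at r, J at j, D_1 at d
   and it is Facilitator's turn, Facilitator can force R and J to occupy the
   same vertex within at most n further Facilitator moves. *)
Fixpoint fac_wins_within (T : finType) (e : rel T) (n : nat) (r j d : T) : Prop :=
  r = j \/
  match n with
  | 0 => False
  | n'.+1 =>
      exists r' j' : T,
        [/\ step e r r', r' != d, step e j j' & j' != d] /\
        forall d' : T, step e d d' -> d' != r' -> d' != j' ->
          fac_wins_within e n' r' j' d'
  end.

(* Main.v *)
Require Import Defs.
From mathcomp Require Import all_boot zify.
Set Implicit Arguments. Unset Strict Implicit.


Fixpoint reach (T : finType) (e : rel T) (L : nat) (x y : T) : Prop :=
  match L with
  | 0 => x = y
  | L'.+1 => exists z, step e x z /\ @reach T e L' z y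
  end.

Lemma main_game (T : finType) (e : rel T) (n : nat) :
  symmetric e ->
  forall (f : nat -> T) (k : nat) (x : T),
  k <= n.*2 ->
  (forall m, m < k -> e (f m) (f m.+1)) ->
  x != f 0 -> x != f k ->
  (forall m L, 0 < m < k -> L <= minn m (k - m) -> ~ reach e L x (f m)) ->
  fac_wins_within e n (f 0) (f k) x.
Proof.
move=> esym; elim: n => [|n IH] f k x hk hE h0 hk' hR.
  have -> : k = 0 by lia.
  by left.
case: k hk hE h0 hk' hR => [|[|[|k]]] hk hE h0 hk' hR; first by left.
- right; exists (f 1), (f 1); split.
  + split; rewrite /step ?eqxx ?orbT //; first by rewrite hE ?orbT.
    - by rewrite eq_sym.
    - by rewrite eq_sym.
  + by move=> d' _ _ _; case: n {IH hk} => [|n]; left.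
- have h1 : x != f 1.
    by apply/eqP => ex; apply: (hR 1 0 isT (leq0n _)).
  right; exists (f 1), (f 1); split.
  + split.
    - by rewrite /step hE ?orbT.
    - by rewrite eq_sym.
    - by rewrite /step esym hE ?orbT.
    - by rewrite eq_sym.
  + by move=> d' _ _ _; case: n {IH hk} => [|n]; left.
- have h1 : x != f 1 by apply/eqP => ex; apply: (hR 1 0 _ (leq0n _)) => //; lia.
  have h2 : x != f k.+2 by apply/eqP => ex; apply: (hR k.+2 0 _ (leq0n _)) => //; lia.
  right; exists (f 1), (f k.+2); split.
  + split.
    - by rewrite /step hE ?orbT.
    - by rewrite eq_sym.
    - by rewrite /step esym hE ?orbT.
    - by rewrite eq_sym.
  + move=> d' hd d1 d2.
    have hE' : forall m, m < k.+1 -> e (f m.+1) (f m.+2).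
      by move=> m hm; apply: hE; lia.
    have := IH (fun m => f m.+1) k.+1 d' _ hE' d1 d2.
    apply => //; try lia.
    move=> m L hm hL hr; apply: (hR m.+1 L.+1); first lia; first lia.
    by exists d'.
Qed.
Definition cdist (T : finType) (c : seq T) (u v : T) := minn (arc1 c u v) (arc2 c u v).

Lemma reach_walk (T : finType) (e : rel T) L x y :
  reach e L x y -> exists p, size p = L /\ path (step e) x p /\ last x p = y.
Proof.
elim: L x => [|L IH] x /=; first by move=> ->; exists [::].
case=> z [hz /IH [p [hs [hp hl]]]]; exists (z :: p) => /=.
by rewrite hz hp hs hl.
Qed.

Lemma step_path_uniq (T : finType) (e : rel T) x p :
  path (step e) x p -> uniq (x :: p) -> path e x p.
Proof.
elim: p x => [|y p IH] x //= /andP [hs hp] /andP [hx hu].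
rewrite IH // andbT.
move: hs; rewrite /step; case/orP => // /eqP exy.
by move: hx; rewrite exy inE eqxx.
Qed.

Lemma cdist_refl (T : finType) (c : seq T) u : cdist c u u = 0.
Proof. rewrite /cdist /arc2 /arc1; lia. Qed.

Lemma cdist_tri (T : finType) (c : seq T) u v w :
  u \in c -> v \in c -> w \in c -> cdist c u v <= cdist c u w + cdist c w v.
Proof.
rewrite -!index_mem /cdist /arc2 /arc1.
move: (index u c) (index v c) (index w c) (size c) => a b d n.
move=> ha hb hd; lia.
Qed.

Lemma shorten_ex (T : eqType) (e : rel T) x p :
  path e x p -> exists p', [/\ path e x p', uniq (x :: p'), {subset p' <= p} & last x p' = last x p].
Proof. by move=> hp; case: (shortenP hp) => p' h1 h2 h3; exists p'. Qed.

Lemma seg (T : finType) (e : rel T) (c : seq T) u w q :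
  ~ has_shortcut e c -> u \in c -> w \in c -> u != w ->
  path (step e) u (rcons q w) -> all (fun y => y \notin c) q ->
  cdist c u w <= (size q).+1.
Proof.
move=> nsc hu hw huw hp hq.
have [p' [hp' hun hsub hl]] := shorten_ex hp.
rewrite last_rcons in hl; subst w.
rewrite leqNgt; apply/negP => hlt; apply: nsc.
exists u, (last u p'); split => //.
have hsz : size p' <= (size q).+1.
  rewrite -(size_rcons q (last u p')); apply: uniq_leq_size => //.
  by case/andP: hun.
exists p'; split; last by move: hlt hsz; rewrite /cdist; move: (arc1 _ _ _) (arc2 _ _ _) (size p') (size q); clear; lia.
split => //; first exact: step_path_uniq.
apply/allP => y; rewrite inE; case/orP => [-> //|hy].
move/hsub: hy; rewrite mem_rcons inE; case/orP => [-> //|hy]; first by rewrite orbT.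
by rewrite (allP hq y hy) !orbT.
Qed.

Lemma walk (T : finType) (e : rel T) (c : seq T) :
  ~ has_shortcut e c -> forall p u q, u \in c ->
  path (step e) u (q ++ p) -> all (fun y => y \notin c) q ->
  last u (q ++ p) \in c -> cdist c u (last u (q ++ p)) <= size q + size p.
Proof.
move=> nsc; elim=> [|z p IH] u q hu hp hq hl.
  rewrite cats0 in hl *.
  case: q hp hq hl => [|y q] _ hq hl; first by rewrite cdist_refl.
  have := mem_last y q; rewrite -/(last u (y :: q)).
  move: hl; rewrite /= => hl hm.
  by move/allP: hq => /(_ _ hm); rewrite hl.
rewrite -cat_rcons in hp hl *.
rewrite cat_path last_rcons in hp; case/andP: hp => hp1 hp2.
have hl' : last u (rcons q z ++ p) = last z p by rewrite last_cat last_rcons.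
case hz: (z \in c).
  rewrite hl' in hl *.
  have := IH z [::] hz hp2 isT hl; rewrite /= => h2.
  apply: leq_trans (cdist_tri hu hl hz) _.
  rewrite addnS -addSn leq_add //.
  case: (eqVneq u z) => [->|huz]; first by rewrite cdist_refl.
  exact: seg nsc hu hz huz hp1 hq.
have := IH u (rcons q z) hu _ _ hl.
rewrite size_rcons /= addSnnS; apply.
  by rewrite cat_path last_rcons hp1 hp2.
by rewrite all_rcons hz hq.
Qed.

Lemma dist_lb (T : finType) (e : rel T) (c : seq T) L u v :
  ~ has_shortcut e c -> u \in c -> v \in c -> reach e L u v -> cdist c u v <= L.
Proof.
move=> nsc hu hv /reach_walk [p [hs [hp hl]]].
have := @walk T e c nsc p u [::] hu hp isT; rewrite /= hl hs; exact.
Qed.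


Definition idx (n t : nat) := if t < n then t else t - n.
Lemma idx_case n t : (t < n /\ idx n t = t) \/ (n <= t /\ idx n t = t - n).
Proof. rewrite /idx; case: ltnP; [left|right]; done. Qed.

Ltac kill_idx := repeat match goal with
 | |- context[idx ?n ?t] => lazymatch t with context[idx _ _] => fail | _ =>
     case: (idx_case n t) => [[+ ->]|[+ ->]] end
end.

Lemma cycle_edge (T : eqType) (e : rel T) (c : seq T) x0 i :
  cycle e c -> i < size c -> e (nth x0 c i) (nth x0 c (idx (size c) i.+1)).
Proof.
case: c => [|y c] //= hc hi.
move/(pathP x0): hc => /(_ i); rewrite size_rcons => /(_ hi).
rewrite -rcons_cons !nth_rcons /= /idx !ltnS.
have hi' : i <= size c by [].
rewrite hi'; case: (ltngtP i (size c)) => h.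
- by [].
- by move: hi'; rewrite leqNgt h.
- by rewrite h subnn.
Qed.


Lemma arc_win (T : finType) (e : rel T) (c : seq T) (r j d : T) (f : nat -> T) (k : nat) :
  symmetric e -> ~ has_shortcut e c -> d \in c -> k + 2 <= size c ->
  f 0 = r -> f k = j -> (forall m, m < k -> e (f m) (f m.+1)) -> d != r -> d != j ->
  (forall m, 0 < m < k -> f m \in c /\ minn m (k - m) < cdist c d (f m)) ->
  fac_wins_within e (size c %/ 2) r j d.
Proof.
move=> esym nsc hd hk <- <- hE hdr hdj H.
apply: main_game => //; first lia.
move=> m L hm hL hr; have [hin hlt] := H m hm.
have := dist_lb nsc hd hin hr; lia.
Qed.

Theorem claim2 (T : finType) (e : rel T) (c : seq T) (r j d : T) :
  simple_graph e -> connected_graph e ->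
  is_cycle e c -> ~ has_shortcut e c ->
  r \in c -> j \in c -> d \in c ->
  d != r -> d != j ->
  fac_wins_within e (size c %/ 2) r j d.
Proof.
move=> [esym _] _ [hn hu hc] nsc hr hj hd hdr hdj.
have hnth : forall i, i < size c -> index (nth r c i) c = i.
  by move=> i hi; apply: index_uniq.
have hinc : forall i, i < size c -> nth r c i \in c by move=> i hi; apply: mem_nth.
have hedge : forall i, i < size c -> e (nth r c i) (nth r c (idx (size c) i.+1)).
  by move=> i hi; apply: cycle_edge.
have er := nth_index r hr; have ej := nth_index r hj; have ed := nth_index r hd.
have hir : index r c < size c by rewrite index_mem.
have hij : index j c < size c by rewrite index_mem.
have hid : index d c < size c by rewrite index_mem.
have hdir : index d c != index r c.
  by apply: contra hdr => /eqP h; rewrite -ed h er.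
have hdij : index d c != index j c.
  by apply: contra hdj => /eqP h; rewrite -ed h ej.
have cdE : forall w, w \in c -> cdist c d w =
   minn (maxn (index d c) (index w c) - minn (index d c) (index w c))
        (size c - (maxn (index d c) (index w c) - minn (index d c) (index w c))).
  by [].
rewrite -er -ej.
move: er ej ed hir hij hid hdir hdij cdE.
move: (index r c) (index j c) (index d c) => ir ij id.
move=> er ej ed hir hij hid hdir hdij cdE.
rewrite er ej.
set n := size c.
have hn3 : 3 <= n by [].
have [kf [hkf hkfe]] : exists kf, kf < n /\ ij = idx n (ir + kf).
  by exists (idx n (ij + n - ir)); kill_idx; lia.
have [q [hq hqe]] : exists q, q < n /\ id = idx n (ir + q).
  by exists (idx n (id + n - ir)); kill_idx; lia.
have hq0 : q != 0.
  by apply: contra hdir => /eqP hq0; rewrite hqe hq0 addn0 /idx hir.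
have hqk : q != kf.
  by apply: contra hdij => /eqP hqk; rewrite hqe hkfe hqk.
subst ij id; clear hdir hdij.
case: (ltnP kf q) => hcase.
- apply: (@arc_win T e c r j d (fun m => nth r c (idx n (ir + m))) kf) => //.
  + lia.
  + by rewrite addn0 /idx hir.
  + move=> m hm.
    have -> : idx n (ir + m.+1) = idx n (idx n (ir + m)).+1.
      by clear -hm hcase hq hir; kill_idx; lia.
    by apply: hedge; clear -hm hcase hq hir; kill_idx; lia.
  + move=> m hm.
    have hi : idx n (ir + m) < n by clear -hm hcase hq hir; kill_idx; lia.
    split; first exact: hinc.
    rewrite cdE ?hinc // hnth //.
    by clear -hm hcase hq hir hq0; kill_idx; lia.
- apply: (@arc_win T e c r j d (fun m => nth r c (idx n (ir + n - m))) (n - kf)) => //.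
  + lia.
  + have -> : idx n (ir + n - 0) = ir by clear -hir; kill_idx; lia.
    by [].
  + by have -> : ir + n - (n - kf) = ir + kf by lia.
  + move=> m hm.
    rewrite esym.
    have -> : idx n (ir + n - m) = idx n (idx n (ir + n - m.+1)).+1.
      by clear -hm hcase hkf hir hq0 hqk; kill_idx; lia.
    by apply: hedge; clear -hm hcase hkf hir hq0 hqk; kill_idx; lia.
  + move=> m hm.
    have hi : idx n (ir + n - m) < n by clear -hm hcase hkf hir hq0 hqk; kill_idx; lia.
    split; first exact: hinc.
    rewrite cdE ?hinc // hnth //.
    by clear -hm hcase hq hkf hir hq0 hqk; kill_idx; lia.
Qed.
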